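(* Let $\nu\in\mathfrak{M}_L(\mathbb{R}^d)$. Then $\Upsilon^0(\nu)\in\mathfrak{M}_L^1(\mathbb{R}^d)$ if and only if $\nu\in\mathfrak{M}_L^1(\mathbb{R}^d)$.
   Context: A Lévy measure on $\mathbb{R}^d$ is a measure $\nu$ with $\nu(\{0\})=0$ and $\int(1\wedge|x|^2)\nu(\mathrm{d}x)<\infty$; their class is $\mathfrak{M}_L(\mathbb{R}^d)$, and $\mathfrak{M}_L^1(\mathbb{R}^d)$ is the class of those with $\int(1\wedge|x|)\nu(\mathrm{d}x)<\infty$. For $\nu\in\mathfrak{M}_L(\mathbb{R}^d)$, $\Upsilon^0(\nu)(B)=\int_0^\infty\nu(u^{-1}B)e^{-u}\mathrm{d}u$ for Borel $B$, where $u^{-1}B=\{u^{-1}x:x\in B\}$ (this is again in $\mathfrak{M}_L(\mathbb{R}^d)$). *)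

(* Defs.v *)
From HB Require Import structures.
From mathcomp Require Import all_boot all_order all_algebra.
From mathcomp Require Import all_classical all_reals all_analysis.
Set Implicit Arguments. Unset Strict Implicit. Unset Printing Implicit Defensive.
Import Order.TTheory GRing.Theory Num.Theory.
Import numFieldNormedType.Exports.
Local Open Scope classical_set_scope.
Local Open Scope ring_scope.

(* R^d as row vectors, with the Borel sigma-algebra (generated by the open
   sets of the usual (product) topology on 'rV[R]_d). *)
Notation Rd R d := (g_sigma_algebraType (@open 'rV[R]_d)).

Definition enorm (R : realType) (d : nat) (x : Rd R d) : R :=
  Num.sqrt (\sum_(i < d) (x : 'rV[R]_d) 0 i ^+ 2).

Definition is_measure (R : realType) (d : nat) (mu : set (Rd R d) -> \bar R) :=
  mu set0 = 0%E /\
  (forall A, measurable A -> (0 <= mu A)%E) /\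
  semi_sigma_additive mu.

Definition LevyMeasure (R : realType) (d : nat) (mu : set (Rd R d) -> \bar R) :=
  is_measure mu /\
  mu [set (0 : Rd R d)] = 0%E /\
  (\int[mu]_x (Order.min 1 (enorm x ^+ 2))%:E < +oo)%E.

Definition LevyMeasure1 (R : realType) (d : nat) (mu : set (Rd R d) -> \bar R) :=
  LevyMeasure mu /\ (\int[mu]_x (Order.min 1 (enorm x))%:E < +oo)%E.

Definition invscale (R : realType) (d : nat) (u : R) (B : set (Rd R d)) :
  set (Rd R d) := (fun x : 'rV[R]_d => u^-1 *: x) @` B.

Definition Upsilon0 (R : realType) (d : nat) (nu : set (Rd R d) -> \bar R)
  (B : set (Rd R d)) : \bar R :=
  (\int[@lebesgue_measure R]_(u in `]0%R, +oo[)
     (nu (invscale u B) * (expR (- u))%:E))%E.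

(* Main.v *)
Require Import Defs.
From HB Require Import structures.
From mathcomp Require Import all_boot all_order all_algebra.
From mathcomp Require Import all_classical all_reals all_analysis.
From mathcomp Require Import measurable_realfun.
From mathcomp Require Import ring lra.
Set Implicit Arguments. Unset Strict Implicit. Unset Printing Implicit Defensive.
Import Order.TTheory GRing.Theory Num.Theory.
Import numFieldNormedType.Exports.
Local Open Scope classical_set_scope.
Local Open Scope ring_scope.



Section eqsetfun.
Local Open Scope ereal_scope.
Context d (T : measurableType d) (R : realType).
Import HBNNSimple.
Lemma eq_setfun_integral (m1 m2 : set T -> \bar R) (f : T -> \bar R) :
  (forall A, measurable A -> m1 A = m2 A) ->
  \int[m1]_x f x = \int[m2]_x f x.
Proof.
move=> m12; rewrite /integral.
by congr (ereal_sup _ - ereal_sup _); rewrite eqEsubset; split;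
  move=> _ [h hf <-]; exists h => //; apply: eq_fsbigr => r _;
  rewrite m12.
Qed.
End eqsetfun.

Section density.
Local Open Scope ereal_scope.
Context d (T : measurableType d) (R : realType).
Variables (mu nu : {measure set T -> \bar R}) (g : T -> R).
Hypothesis mg : measurable_fun setT g.
Hypothesis g0 : forall x, (0 <= g x)%R.
Hypothesis nuE : forall A, measurable A -> nu A = \int[mu]_(x in A) (g x)%:E.
Import HBNNSimple.

Lemma density_integral (f : T -> \bar R) : (forall x, 0 <= f x) -> measurable_fun setT f ->
  \int[nu]_x f x = \int[mu]_x (f x * (g x)%:E).
Proof.
move=> f0 mf.
have mE : measurable (setT : set T) by [].
pose h := nnsfun_approx mE mf.
have -> : \int[nu]_(x in setT) f x =
    lim (\int[nu]_(x in setT) (EFin \o h n) x @[n --> \oo]).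
  have fE x : setT x -> f x = lim ((EFin \o h n) x @[n --> \oo]).
    by move=> Ex; apply/esym/cvg_lim => //; exact: cvg_nnsfun_approx.
  under eq_integral => x /[!inE] /fE -> //.
  apply: monotone_convergence => //.
  - move=> n; apply/measurable_EFinP.
    by apply: (measurable_funS measurableT) => //; exact/measurable_funP.
  - by move=> n x Ex //=; rewrite lee_fin.
  - by move=> x Ex a b ab; rewrite lee_fin; exact/lefP/nd_nnsfun_approx.
have -> : \int[mu]_(x in setT) (f x * (g x)%:E) =
    lim (\int[mu]_(x in setT) ((EFin \o h n) x * (g x)%:E) @[n --> \oo]).
  have fg x : setT x -> f x * (g x)%:E =
      lim (((EFin \o h n) x * (g x)%:E) @[n --> \oo]).
    by move=> Ex; apply/esym/cvg_lim => //; apply: cvgeZr;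
      [by []|exact: cvg_nnsfun_approx].
  under eq_integral => x /[!inE] /fg -> //.
  apply: monotone_convergence => [//| | |].
  - move=> n; apply/emeasurable_funM; apply/measurable_funTS.
      exact/measurable_EFinP.
    exact/measurable_EFinP.
  - by move=> n x Ex /=; rewrite mule_ge0 ?lee_fin.
  - by move=> x Ex a b ab/=; rewrite lee_wpmul2r ?lee_fin//; exact/lefP/nd_nnsfun_approx.
suff suf n : \int[mu]_(x in setT) ((EFin \o h n) x * (g x)%:E) =
    \int[nu]_(x in setT) (EFin \o h n) x.
  by congr (lim (_ @ \oo)); apply/funext => n; exact/esym/suf.
transitivity (\int[nu]_(x in setT)
   (\sum_(y \in range (h n)) (y * \1_(h n @^-1` [set y]) x)%:E)); last first.
  by apply: eq_integral => t tE; rewrite /= fimfunE -fsumEFin.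
have indich m r : measurable_fun setT (fun x => (r * \1_(h m @^-1` [set r]) x)%:E).
  by apply: (measurable_comp measurableT) => //; exact: measurable_funM.
rewrite ge0_integral_fsum//; last by move=> m y Ey; exact: nnfun_muleindic_ge0.
transitivity (\int[mu]_(x in setT) (\sum_(y \in range (h n))
    (y * \1_(h n @^-1` [set y]) x)%:E * (g x)%:E)).
  under [RHS]eq_integral => x xE.
    rewrite -ge0_mule_fsuml => [|y]; last exact: nnfun_muleindic_ge0.
    rewrite fsumEFin // -(fimfunE _ x); over.
  by [].
rewrite ge0_integral_fsum//; last 2 first.
  - move=> y; apply: emeasurable_funM => //.
    exact/measurable_EFinP.
  - by move=> m y Ey; apply: mule_ge0; [exact: nnfun_muleindic_ge0|rewrite lee_fin].
apply: eq_fsbigr => r rhn.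
under [RHS]eq_integral do rewrite EFinM.
rewrite integralZl_indic_nnsfun => //.
under eq_integral do rewrite EFinM -muleA.
rewrite ge0_integralZl//.
- under eq_integral do rewrite muleC.
  rewrite (eq_integral ((EFin \o g) \_ (h n @^-1` [set r]))); last first.
    by move=> x xE; rewrite epatch_indic.
  by rewrite -integral_mkcondr -nuE// integral_indic// setIC.
- apply: emeasurable_funM; first exact/measurable_EFinP.
  exact/measurable_EFinP.
- by move=> t Et; rewrite mule_ge0 ?lee_fin.
- by move: rhn; rewrite inE => -[t _ <-]; rewrite lee_fin.
Qed.
End density.



Section phi.
Context (R : realType) (d : nat).
Local Notation V := 'rV[R]_d.

Lemma open_measRd (A : set V) : open A -> measurable (A : set (Rd R d)).
Proof. move=> oA; exact: sub_sigma_algebra. Qed.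

Definition phi (z : R * Rd R d) : Rd R d := z.1 *: (z.2 : V).

Definition Cs (O : set V) (r : R) : set V := [set y | forall z, `|y - z| < r -> O z].

Lemma CsC_open O r : open (~` Cs O r).
Proof.
have -> : ~` Cs O r = \bigcup_(z in ~` O) ball z r.
  apply/seteqP; split => y /=.
    move=> /existsNP[z] /not_implyP[yz Oz]; exists z => //.
    by rewrite -ball_normE /ball_ /= distrC.
  move=> [z Oz] bz hC; apply: Oz; apply: hC.
  by move: bz; rewrite -ball_normE /ball_ /= distrC.
by apply: bigcup_open => z _; exact: ball_open.
Qed.

Definition Box (O : set V) (q r : rat) (m : nat) : set (R * Rd R d) :=
  if (0 < ratr r :> R) then
   `](ratr q - ratr r / (2 * m.+1%:R)), (ratr q + ratr r / (2 * m.+1%:R))[%classic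
   `*` ([set x : V | `|x| < m.+1%:R /\ Cs O (ratr r) (ratr q *: x)] : set (Rd R d))
  else set0.

Lemma measurable_Box O q r m : measurable (Box O q r m).
Proof.
rewrite /Box; case: ifPn => r0 //; apply: measurableX => //.
have -> : [set x : V | `|x| < m.+1%:R /\ Cs O (ratr r) (ratr q *: x)] =
  ball (0 : V) m.+1%:R `&` ~` (( *:%R (ratr q : R)) @^-1` (~` Cs O (ratr r))).
  apply/seteqP; split => x /=.
    by move=> [xm cx]; split; [rewrite -ball_normE /ball_ /= sub0r normrN|move=> /(_ cx)].
  move=> [xm /contrapT cx]; split => //.
  by move: xm; rewrite -ball_normE /ball_ /= sub0r normrN.
apply: measurableI; first by apply: open_measRd; exact: ball_open.
apply: measurableC; apply: open_measRd.
by move: (@CsC_open O (ratr r)); apply: (proj1 (continuousP _)); exact: scaler_continuous.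
Qed.


Lemma prod_bound (a b r M : R) : 0 <= a -> 0 <= b -> 0 < M ->
  a < r / (2 * M) -> b < M -> a * b < r / 2.
Proof.
move=> a0 b0 M0 ar bM.
have h : a * b <= a * M by rewrite ler_wpM2l // ltW.
have : a * M < r / (2 * M) * M by rewrite ltr_pM2r.
have -> : r / (2 * M) * M = r / 2 by field; rewrite gt_eqF.
lra.
Qed.

Lemma phi_preimage_open (O : set V) : open O ->
  phi @^-1` O = \bigcup_q \bigcup_r \bigcup_m Box O q r m.
Proof.
move=> oO; apply/seteqP; split.
- move=> [u x] /= Oux.
  have := oO _ Oux; move/nbhs_ballP => [e /= e0 ballsub].
  pose m := Num.trunc `|x|.
  have xm : `|x| < m.+1%:R := truncnS_gt _.
  have e20 : 0 < e / 2 by rewrite divr_gt0.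
  have [r] := rat_in_itvoo e20; rewrite in_itv /= => /andP[r0 re].
  pose del : R := ratr r / (2 * m.+1%:R).
  have del0 : 0 < del by rewrite /del divr_gt0 // mulr_gt0.
  have : u - del < u + del by lra.
  move=> /rat_in_itvoo[q]; rewrite in_itv /= => /andP[q1 q2].
  exists q => //; exists r => //; exists m => //.
  rewrite /Box r0; split; first by rewrite /= in_itv /= -/del; apply/andP; split; lra.
  split => //= z hz; apply: ballsub.
  rewrite -ball_normE /ball_ /phi /=.
  have : `|u *: x - ratr q *: x| < ratr r / 2.
    rewrite -scalerBl normrZ; apply: (prod_bound (M := m.+1%:R)) => //.
    by rewrite -/del ltr_distlC; apply/andP; split; lra.
  have := ler_distD (ratr q *: x) (u *: x) z.
  lra.
- move=> [u x] [q _ [r _ [m _]]]; rewrite /Box; case: ifPn => r0 // [/=].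
  rewrite in_itv /= => /andP[q1 q2] [xm cs].
  apply: cs.
  have : `|ratr q *: x - u *: x| < ratr r / 2.
    rewrite -scalerBl normrZ; apply: (prod_bound (M := m.+1%:R)) => //.
    by rewrite ltr_distlC q1 q2.
  lra.
Qed.

Lemma measurable_phi_open (O : set V) : open O ->
  measurable (phi @^-1` O : set (R * Rd R d)).
Proof.
move=> oO; rewrite phi_preimage_open //.
apply: bigcupT_measurable_rat => q; apply: bigcupT_measurable_rat => r.
apply: bigcupT_measurable => m; exact: measurable_Box.
Qed.

Lemma measurable_phi : measurable_fun setT phi.
Proof.
apply: measurability; first reflexivity.
by move=> _ [B oB <-]; rewrite setTI; exact: measurable_phi_open.
Qed.

End phi.

Section enorm_lemmas.
Context (R : realType) (d : nat).
Local Notation V := 'rV[R]_d.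

Lemma cont_measRd (f : V -> R) : continuous f -> measurable_fun setT (f : Rd R d -> R).
Proof.
move=> cf; apply: (@measurability _ _ (Rd R d) R setT f _ (RGenOpens.measurableE R)).
move=> _ [_ [a [b ->]] <-]; rewrite setTI; apply: open_measRd.
by move/continuousP: cf; apply; exact: interval_open.
Qed.

Lemma enorm_ge0 (x : Rd R d) : 0 <= enorm x.
Proof. exact: sqrtr_ge0. Qed.

Lemma enormZ (u : R) (x : Rd R d) : enorm (phi (u, x)) = `|u| * enorm x.
Proof.
rewrite /enorm /phi /=.
under eq_bigr do rewrite mxE exprMn.
by rewrite -mulr_sumr sqrtrM ?sqr_ge0 // sqrtr_sqr.
Qed.

Lemma measurable_enorm : measurable_fun setT (@enorm R d).
Proof.
rewrite /enorm; apply: measurableT_comp.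
  by apply: continuous_measurable_fun; exact: sqrt_continuous.
apply: measurable_sum => i; apply: measurable_funX.
apply: (cont_measRd (f := fun x : V => x 0 i)); exact: coord_continuous.
Qed.

Definition Fp (p : nat) (x : Rd R d) : R := Order.min 1 (enorm x ^+ p).

Lemma measurable_Fp p : measurable_fun setT (Fp p).
Proof.
apply: measurable_minr => //; apply: measurable_funX; exact: measurable_enorm.
Qed.

Lemma Fp_ge0 p x : 0 <= Fp p x.
Proof. by rewrite /Fp le_min ler01 exprn_ge0 // enorm_ge0. Qed.

Lemma min_scale_le (p : nat) (u e : R) : 0 <= u -> 0 <= e ->
  Order.min 1 ((u * e) ^+ p) <= (1 + u ^+ p) * Order.min 1 (e ^+ p).
Proof.
move=> u0 e0; have up : 0 <= u ^+ p by rewrite exprn_ge0.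
have ep : 0 <= e ^+ p by rewrite exprn_ge0.
have uep : 0 <= u ^+ p * e ^+ p by rewrite mulr_ge0.
rewrite exprMn /Order.min; case: ifPn => h1; case: ifPn => h2.
- nra.
- nra.
- rewrite -leNgt in h1; nra.
- nra.
Qed.

Lemma min_scale_ge (p : nat) (u e : R) : 1 <= u -> 0 <= e ->
  Order.min 1 (e ^+ p) <= Order.min 1 ((u * e) ^+ p).
Proof.
move=> u1 e0.
have h : e ^+ p <= (u * e) ^+ p.
  have ep : 0 <= e ^+ p by rewrite exprn_ge0.
  rewrite exprMn; have := exprn_ege1 p u1; nra.
rewrite /Order.min; case: ifPn => h1; case: ifPn => h2 //.
- lra.
- by rewrite leNgt.
Qed.

End enorm_lemmas.

Section m1_section.
Context (R : realType).
Notation leb := (@lebesgue_measure R).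

Definition gexp (u : R) : R := ((fun u : R => expR (- u)) \_ `]0, +oo[) u.

Lemma gexp_ge0 u : 0 <= gexp u.
Proof. by rewrite /gexp patchE; case: ifP => _ //; exact: expR_ge0. Qed.

Lemma measurable_gexp : measurable_fun setT gexp.
Proof.
apply/measurable_restrict => //; apply: measurable_funTS.
apply: continuous_measurable_fun => x.
by apply: continuous_comp; [exact: oppr_continuous|exact: continuous_expR].
Qed.

Lemma measurable_EFin_gexp : measurable_fun setT (EFin \o gexp).
Proof. by apply/measurable_EFinP; exact: measurable_gexp. Qed.

Section m1def.
Local Open Scope ereal_scope.
Definition m1 (A : set (measurableTypeR R)) : \bar R := \int[leb]_(x in A) (gexp x)%:E.

Let m10 : m1 set0 = 0. Proof. by rewrite /m1 integral_set0. Qed.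
Let m1_ge0 A : 0 <= m1 A.
Proof. by apply: integral_ge0 => x _; rewrite lee_fin gexp_ge0. Qed.
Let m1_sa : semi_sigma_additive m1.
Proof.
have := @semi_sigma_additive_nng_induced _ _ _ leb (EFin \o gexp) measurable_EFin_gexp.
by apply => x; rewrite /= lee_fin gexp_ge0.
Qed.

HB.instance Definition _ := isMeasure.Build _ _ _ m1 m10 m1_ge0 m1_sa.

Lemma gexp_le_pdf u : (gexp u <= exponential_pdf 1 u)%R.
Proof.
rewrite /gexp patchE; case: ifPn => [|_]; last first.
  by apply: exponential_pdf_ge0.
rewrite inE /= in_itv /= andbT => u0.
rewrite exponential_pdfE; last exact: ltW.
by rewrite mul1r mulN1r.
Qed.

Lemma m1_setT : m1 setT < +oo.
Proof.
apply: (@le_lt_trans _ _ 1); last by rewrite ltry.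
rewrite /m1 -(integral_exponential_pdf (R := R) (rate := 1)) //.
apply: ge0_le_integral => //.
- by move=> x _; rewrite lee_fin gexp_ge0.
- exact: measurable_EFin_gexp.
- by apply/measurable_EFinP; exact: measurable_exponential_pdf.
- by move=> x _; rewrite lee_fin gexp_le_pdf.
Qed.

HB.instance Definition _ := Measure_isFinite.Build _ _ _ m1
  (lty_fin_num_fun m1_setT).

End m1def.
End m1_section.

Section m1_int.
Context (R : realType).
Notation leb := (@lebesgue_measure R).

Lemma m1_integral (f : R -> \bar R) : (forall x, (0 <= f x)%E) -> measurable_fun setT f ->
  (\int[@m1 R]_x f x = \int[leb]_(u in `]0%R, +oo[) (f u * (expR (- u))%:E))%E.
Proof.
move=> f0 mf.
rewrite (@density_integral _ _ _ leb (@m1 R) (@gexp R) (@measurable_gexp R)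
  (@gexp_ge0 R) (fun A _ => erefl) f f0 mf).
rewrite [RHS]integral_mkcond; apply: eq_integral => x _.
rewrite /gexp !patchE; case: ifPn => _ //.
by rewrite mule0.
Qed.


Lemma poly_exp_bound (p : nat) (u : R) : (p <= 2)%N -> 0 < u ->
  (1 + u ^+ p) * expR (- u) <= 32 * exponential_pdf (2^-1) u.
Proof.
move=> p2 u0.
rewrite exponential_pdfE; last exact: ltW.
set A := expR (- (u / 2)).
set E := expR (u / 4).
have A0 : 0 < A by exact: expR_gt0.
have E0 : 0 < E by exact: expR_gt0.
have eA : expR (- 2^-1 * u) = A by rewrite /A mulNr mulrC.
have eu : expR (- u) = A * A by rewrite /A -expRD; congr expR; field.
have AE : A * (E * E) = 1 by rewrite /A /E -!expRD -expR0; congr expR; field.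
have hE : 1 + u / 4 <= E by exact: expR_ge1Dx.
have hpoly : 1 + u ^+ p <= 16 * (1 + u / 4) ^+ 2.
  move: p2; case: p => [|[|[|//]]] _; rewrite ?expr0 ?expr1 ?expr2; nra.
have hEE : (1 + u / 4) ^+ 2 <= E * E by rewrite expr2; nra.
rewrite eA eu.
have h1 : 1 + u ^+ p <= 16 * (E * E) by nra.
have -> : 32 * (2^-1 * A) = 16 * E * E * A * A.
  have -> : 16 * E * E * A * A = 16 * A * (A * (E * E)) by ring.
  by rewrite AE mulr1; field.
have AA : 0 <= A * A by rewrite mulr_ge0 // ltW.
nra.
Qed.

Lemma int_poly_exp_fin (p : nat) : (p <= 2)%N ->
  (\int[leb]_(u in `]0%R, +oo[) ((1 + u ^+ p) * expR (- u))%:E < +oo)%E.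
Proof.
move=> p2.
have mpdf : measurable_fun setT (fun u => (32 * @exponential_pdf R (2^-1) u)%:E).
  apply/measurable_EFinP; apply: measurable_funM => //.
  exact: measurable_exponential_pdf.
have H1 : (\int[leb]_(u in `]0%R, +oo[) ((1 + u ^+ p) * expR (- u))%:E <=
    \int[leb]_(u in `]0%R, +oo[) (32 * exponential_pdf (2^-1) u)%:E)%E.
  apply: ge0_le_integral => //.
  - move=> x x0; rewrite lee_fin mulr_ge0 // ?expR_ge0 //.
    by rewrite addr_ge0 // exprn_ge0 //; move: x0; rewrite /= in_itv /= andbT => /ltW.
  - apply/measurable_EFinP; apply: measurable_funM.
      apply: measurable_funD => //; exact: measurable_funX.
    apply: measurableT_comp => //; exact: measurable_funN.
  - exact: measurable_funTS.
  - move=> x; rewrite /= in_itv /= andbT => x0.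
    by rewrite lee_fin poly_exp_bound.
have H2 : (\int[leb]_(u in `]0%R, +oo[) (32 * exponential_pdf (2^-1) u)%:E <=
    \int[leb]_u (32 * exponential_pdf (2^-1) u)%:E)%E.
  apply: ge0_subset_integral => //.
  by move=> x _; rewrite lee_fin mulr_ge0 // exponential_pdf_ge0.
have H3 : (\int[leb]_u (32 * @exponential_pdf R (2^-1) u)%:E < +oo)%E.
  under eq_integral do rewrite EFinM.
  rewrite ge0_integralZl_EFin //.
  - by rewrite integral_exponential_pdf ?invr_gt0 // mule1 ltry.
  - by move=> x _; rewrite lee_fin exponential_pdf_ge0.
  - by apply/measurable_EFinP; exact: measurable_exponential_pdf.
exact: (le_lt_trans H1 (le_lt_trans H2 H3)).
Qed.

Lemma int_lower_bound (G : R -> \bar R) (c : \bar R) :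
  measurable_fun setT G -> (forall u, (0 <= G u)%E) -> (0 <= c)%E ->
  (forall u, 1 <= u -> (c <= G u)%E) ->
  (c * (expR (- 2))%:E <= \int[leb]_(u in `]0%R, +oo[) (G u * (expR (- u))%:E))%E.
Proof.
move=> mG G0 c0 cG.
have mGe : measurable_fun setT (fun u => G u * (expR (- u))%:E)%E.
  apply: emeasurable_funM => //; apply/measurable_EFinP.
  apply: measurableT_comp => //; exact: measurable_funN.
apply: (@le_trans _ _ (\int[leb]_(u in `[1%R, 2%R]) (G u * (expR (- u))%:E))%E); last first.
  apply: ge0_subset_integral => //.
  - exact: measurable_funTS.
  - by move=> x _; rewrite mule_ge0 // lee_fin expR_ge0.
  - move=> x; rewrite /= !in_itv /= andbT => /andP[x1 _].
    by rewrite (lt_le_trans ltr01).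
apply: (@le_trans _ _ (\int[leb]_(u in `[1%R, 2%R]) (cst (c * (expR (- 2))%:E) u))%E).
  have L1 : (1%E <= lebesgue_measure (`[1%R, 2%R]%classic : set (measurableTypeR R)))%E.
    rewrite lebesgue_measure_itv /= lte_fin ltr1n -EFinD lee_fin; lra.
  rewrite integral_cst //.
  rewrite -[X in (X <= _)%E](mule1 (c * _)); apply: lee_wpmul2l => //.
  by rewrite mule_ge0 // lee_fin expR_ge0.
apply: ge0_le_integral => //.
- by move=> x _; rewrite mule_ge0 // lee_fin expR_ge0.
- exact: measurable_funTS.
- move=> x; rewrite /= in_itv /= => /andP[x1 x2].
  apply: lee_pmul; [exact: c0|by rewrite lee_fin expR_ge0|exact: (cG _ x1)|].
  by rewrite lee_fin ler_expR lerN2.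
Qed.

End m1_int.



Section main.
Context (R : realType) (d : nat) (nu : {measure set (Rd R d) -> \bar R}).
Local Notation V := 'rV[R]_d.
Local Notation T := (Rd R d).

Lemma enorm_eq0 (x : T) : enorm x = 0 -> x = 0 :> V.
Proof.
rewrite /enorm => /eqP; rewrite sqrtr_eq0 => hs.
have hs0 : \sum_(i < d) (x : V) 0 i ^+ 2 = 0.
  apply/eqP; rewrite eq_le hs sumr_ge0 // => i _; exact: sqr_ge0.
have h := psumr_eq0P (fun i _ => sqr_ge0 ((x : V) 0 i)) hs0.
apply/matrixP => i j; rewrite (ord1 i) mxE; apply/eqP; rewrite -sqrf_eq0; apply/eqP.
exact: h.
Qed.

Lemma Fp2_eq0 (x : T) : Fp 2 x = 0 <-> x = 0 :> V.
Proof.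
split.
  rewrite /Fp /Order.min; case: ifPn => [_ /eqP|]; first by rewrite oner_eq0.
  move=> _ /eqP; rewrite sqrf_eq0 => /eqP; exact: enorm_eq0.
move=> x0; rewrite /Fp /enorm x0.
under eq_bigr do rewrite mxE expr0n /=.
by rewrite big1 // sqrtr0 expr0n /= /Order.min ltr10.
Qed.

Hypothesis hL : LevyMeasure nu.

Let nu0 : nu [set (0 : T)] = 0%E.
Proof. by case: hL => _ []. Qed.

Let nuFp2 : (\int[nu]_x (Fp 2 x)%:E < +oo)%E.
Proof. by case: hL => _ []. Qed.

Definition Fn (n : nat) : set T :=
  if n is k.+1 then [set x : T | k.+1%:R^-1 < Fp 2 x] else [set x : T | Fp 2 x = 0].

Lemma measurable_Fn n : measurable (Fn n).
Proof.
case: n => [|k] /=.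
  have -> : [set x : T | Fp 2 x = 0] = setT `&` (Fp 2 @^-1` [set 0]) by rewrite setTI.
  exact: (measurable_Fp 2 measurableT (measurable_set1 0)).
have -> : [set x : T | k.+1%:R^-1 < Fp 2 x] = setT `&` (Fp 2 @^-1` `]k.+1%:R^-1, +oo[)%classic.
  by rewrite setTI; apply/seteqP; split => x /=; rewrite in_itv /= andbT.
exact: (measurable_Fp 2 measurableT (measurable_itv _)).
Qed.

Lemma nu_sigma_finite : sigma_finite setT nu.
Proof.
exists Fn.
  apply/seteqP; split => // x _.
  have [x0|x0] := eqVneq (Fp 2 x) 0; first by exists 0%N.
  have Fp0 : 0 < Fp 2 x by rewrite lt0r x0 Fp_ge0.
  exists (Num.trunc (Fp 2 x)^-1).+1 => //=.
  have := truncnS_gt (Fp 2 x)^-1.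
  set k := (Num.trunc _).+1%:R => hk.
  have k0 : 0 < k by rewrite /k ltr0n.
  rewrite -(invrK (Fp 2 x)) ltf_pV2 ?posrE ?invr_gt0 //.
move=> n; split; first exact: measurable_Fn.
case: n => [|k] /=.
  have -> : [set x : T | Fp 2 x = 0] = [set (0 : T)].
    by apply/seteqP; split => x /=; rewrite Fp2_eq0.
  by rewrite nu0 ltry.
set F := [set x : T | k.+1%:R^-1 < Fp 2 x].
have mF : measurable F := measurable_Fn k.+1.
have H1 : (k.+1%:R^-1%:E * nu F <= \int[nu]_x (Fp 2 x)%:E)%E.
  rewrite -integral_cst //.
  apply: (@le_trans _ _ (\int[nu]_(x in F) (Fp 2 x)%:E)%E).
    apply: ge0_le_integral => //.
    - by move=> x _; rewrite lee_fin invr_ge0.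
    - apply/measurable_EFinP; apply: measurable_funTS; exact: measurable_Fp.
    - by move=> x Fx; rewrite lee_fin ltW.
  apply: ge0_subset_integral => //.
    by apply/measurable_EFinP; exact: measurable_Fp.
  by move=> x _; rewrite lee_fin Fp_ge0.
have H2 := le_lt_trans H1 nuFp2.
move: H2; case: (nu F) (measure_ge0 nu F) => [r| |] //.
  by move=> _ _; rewrite ltry.
by move=> _; rewrite gt0_muley ?lte_fin ?invr_gt0.
Qed.


Let nuS : set T -> \bar R := nu.
HB.instance Definition _ := Measure.on nuS.
HB.instance Definition _ := Measure_isSigmaFinite.Build _ _ _ nuS nu_sigma_finite.

Let RR := measurableTypeR R.
Let P := ((@m1 R) \x nuS)%E.
Let phiM : RR * T -> T := @phi R d.
Let mphi : measurable_fun setT phiM := @measurable_phi R d.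

Lemma invscaleE (u : R) (B : set T) : 0 < u ->
  xsection (phiM @^-1` B) u = invscale u B.
Proof.
move=> u0; apply/seteqP; split => y; rewrite /xsection /invscale /= ?inE /=.
  move=> hB; exists (phi (u, y)) => //.
  rewrite /phi /= scalerA mulVf ?scale1r //.
  by rewrite gt_eqF.
move=> [z Bz <-]; rewrite /phiM /phi /= scalerA mulfV ?scale1r //.
by rewrite gt_eqF.
Qed.

Lemma measurable_phiM B : measurable B -> measurable (phiM @^-1` B).
Proof. by move=> mB; rewrite -[X in measurable X]setTI; exact: mphi. Qed.

Lemma UpsE B : measurable B -> Upsilon0 nu B = pushforward P phiM B.
Proof.
move=> mB; rewrite /pushforward /P /product_measure1.
rewrite m1_integral; last 2 first.
- by move=> u; exact: measure_ge0.
- exact: (measurable_fun_xsection nuS (measurable_phiM mB)).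
rewrite /Upsilon0; apply: eq_integral => u; rewrite inE /= in_itv /= andbT => u0.
by rewrite /= invscaleE.
Qed.

Lemma Ups_sa : semi_sigma_additive (Upsilon0 nu).
Proof.
move=> F mF tF mUF; rewrite UpsE //.
have -> : (fun n => \sum_(0 <= i < n) Upsilon0 nu (F i)) =
    (fun n => \sum_(0 <= i < n) pushforward P phiM (F i)).
  by apply/funext => n; apply: eq_bigr => i _; exact: UpsE.
rewrite /pushforward preimage_bigcup.
apply: (measure_semi_sigma_additive (s := P)).
- by move=> n; exact: measurable_phiM.
- apply/trivIsetP => /= i j _ _ ij; rewrite -preimage_setI.
  by move/trivIsetP : tF => /(_ _ _ _ _ ij) ->//; rewrite preimage_set0.
- by rewrite -preimage_bigcup; exact: measurable_phiM.
Qed.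

Definition G (F : T -> \bar R) (u : R) := (\int[nu]_x F (phi (u, x)))%E.

Lemma measurable_G (F : T -> \bar R) : (forall x, (0 <= F x)%E) -> measurable_fun setT F ->
  measurable_fun setT (G F).
Proof.
move=> F0 mF.
have mFp : measurable_fun setT (F \o phiM) by exact: measurableT_comp.
exact: (measurable_fun_fubini_tonelli_F (m2 := nuS) (F \o phiM) mFp (fun z => F0 _)).
Qed.

Lemma Ups_integral (F : T -> \bar R) : (forall x, (0 <= F x)%E) -> measurable_fun setT F ->
  (\int[Upsilon0 nu]_x F x =
   \int[lebesgue_measure]_(u in `]0%R, +oo[) (G F u * (expR (- u))%:E))%E.
Proof.
move=> F0 mF.
rewrite (eq_setfun_integral (m2 := pushforward P phiM)); last exact: UpsE.
rewrite (ge0_integral_pushforward mphi P measurableT mF (fun y _ => F0 y)).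
rewrite preimage_setT.
have mFp : measurable_fun setT (F \o phiM) by exact: measurableT_comp.
rewrite /P (fubini_tonelli1 (m1 := @m1 R) (m2 := nuS) (F \o phiM) mFp (fun z => F0 _)).
rewrite m1_integral //.
- by move=> u; apply: integral_ge0 => x _; exact: F0.
- exact: (measurable_fun_fubini_tonelli_F (m2 := nuS) (F \o phiM) mFp (fun z => F0 _)).
Qed.


Lemma Ups_is_measure : is_measure (Upsilon0 nu).
Proof.
split.
  rewrite /Upsilon0 (eq_integral (cst 0%E)) ?integral0 // => u _.
  by rewrite /invscale image_set0 measure0 mul0e.
split; last exact: Ups_sa.
move=> A _; apply: integral_ge0 => u _; apply: mule_ge0 => //.
Qed.

Lemma Ups_set0 : Upsilon0 nu [set (0 : T)] = 0%E.
Proof.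
rewrite /Upsilon0 (eq_integral (cst 0%E)) ?integral0 // => u _.
rewrite /invscale image_set1 scaler0.
by rewrite (_ : [set (0 : V)] = [set (0 : T)]) // nu0 mul0e.
Qed.

Lemma measurable_phiu (u : R) : measurable_fun setT (fun x : T => phi (u, x)).
Proof.
apply: (measurableT_comp (@measurable_phi R d)).
exact: measurable_fun_pair.
Qed.

Let FE p : measurable_fun setT (fun x : T => (Fp p x)%:E).
Proof. exact: (measurableT_comp (@EFin_measurable R setT) (@measurable_Fp R d p)). Qed.

Let F0 p : forall x : T, (0 <= (Fp p x)%:E)%E.
Proof. by move=> x; rewrite lee_fin Fp_ge0. Qed.

Lemma Ups_Fp_fin p : (p <= 2)%N -> (\int[nu]_x (Fp p x)%:E < +oo)%E ->
  (\int[Upsilon0 nu]_x (Fp p x)%:E < +oo)%E.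
Proof.
move=> p2 hnu.
rewrite (Ups_integral (F0 p) (FE p)).
set c := (\int[nu]_x (Fp p x)%:E)%E.
have c0 : (0 <= c)%E by apply: integral_ge0 => x _; exact: F0.
have mexp : measurable_fun setT (fun u : R => (expR (- u))%:E).
  by apply/measurable_EFinP; apply: measurableT_comp => //; exact: measurable_funN.
have mpoly : measurable_fun setT (fun u : R => ((1 + u ^+ p) * expR (- u))%:E).
  apply/measurable_EFinP; apply: measurable_funM.
    apply: measurable_funD => //; exact: measurable_funX.
  apply: measurableT_comp => //; exact: measurable_funN.
have H1 : (\int[lebesgue_measure]_(u in `]0%R, +oo[) (G (fun x => (Fp p x)%:E) u * (expR (- u))%:E) <=
  \int[lebesgue_measure]_(u in `]0%R, +oo[) (c * ((1 + u ^+ p) * expR (- u))%:E))%E.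
  apply: ge0_le_integral => //.
  - move=> u _; apply: mule_ge0; last by rewrite lee_fin expR_ge0.
    by apply: integral_ge0 => x _; exact: F0.
  - apply: emeasurable_funM; last exact: measurable_funTS.
    apply: measurable_funTS; exact: (measurable_G (F0 p) (FE p)).
  - apply: emeasurable_funM => //; exact: measurable_funTS.
  - move=> u; rewrite /= in_itv /= andbT => u0.
    rewrite EFinM muleA; apply: lee_wpmul2r; first by rewrite lee_fin expR_ge0.
    have up : 0 <= 1 + u ^+ p by rewrite addr_ge0 // exprn_ge0 // ltW.
    rewrite muleC -(@ge0_integralZl_EFin _ _ _ nu setT measurableT _ (fun x _ => F0 p x) (FE p) _ up).
    apply: ge0_le_integral.
    + by [].
    + by move=> x _; exact: F0.
    + exact: (measurableT_comp (FE p) (measurable_phiu u)).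
    + apply/measurable_EFinP; apply: measurable_funM => //.
      exact: measurable_Fp.
    + move=> x _; rewrite -EFinM lee_fin /Fp enormZ ger0_norm; last exact: ltW.
      by apply: min_scale_le; [exact: ltW|exact: enorm_ge0].
apply: (le_lt_trans H1).
have f0' : forall u : R, `]0%R, +oo[%classic u -> (0 <= ((1 + u ^+ p) * expR (- u))%:E)%E.
  move=> u; rewrite /= in_itv /= andbT => u0.
  by rewrite lee_fin mulr_ge0 ?expR_ge0 // addr_ge0 // exprn_ge0 // ltW.
rewrite (@ge0_integralZl _ _ _ lebesgue_measure _ (measurable_itv _) _ (measurable_funTS mpoly) c f0' c0).
apply: lte_mul_pinfty => //; first by rewrite ge0_fin_numE.
exact: int_poly_exp_fin.
Qed.

Lemma nu_Fp1_fin : (\int[Upsilon0 nu]_x (Fp 1 x)%:E < +oo)%E ->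
  (\int[nu]_x (Fp 1 x)%:E < +oo)%E.
Proof.
rewrite (Ups_integral (F0 1) (FE 1)).
set c := (\int[nu]_x (Fp 1 x)%:E)%E => hU.
have c0 : (0 <= c)%E by apply: integral_ge0 => x _; exact: F0.
have cG : forall u, 1 <= u -> (c <= G (fun x => (Fp 1 x)%:E) u)%E.
  move=> u u1; apply: ge0_le_integral.
  - by [].
  - by move=> x _; exact: F0.
  - exact: FE.
  - exact: (measurableT_comp (FE 1) (measurable_phiu u)).
  - have u0 : 0 <= u by exact: (le_trans ler01).
    move=> x _; rewrite lee_fin /Fp enormZ ger0_norm //.
    by apply: min_scale_ge => //; exact: enorm_ge0.
have G0 : forall u, (0 <= G (fun x => (Fp 1 x)%:E) u)%E.
  by move=> u; apply: integral_ge0 => x _; exact: F0.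
have := le_lt_trans (int_lower_bound (measurable_G (F0 1) (FE 1)) G0 c0 cG) hU.
move: c0; clear cG hU; case: c => [r| |] //.
  by move=> _ _; rewrite ltry.
by move=> _; rewrite gt0_mulye ?lte_fin ?expR_gt0.
Qed.

Lemma main_iff : LevyMeasure1 (Upsilon0 nu) <-> LevyMeasure1 nu.
Proof.
split.
- move=> [_ hU1]; split => //.
  exact: (nu_Fp1_fin hU1).
- move=> [_ hnu1]; split; last exact: (@Ups_Fp_fin 1 erefl hnu1).
  split; first exact: Ups_is_measure.
  split; first exact: Ups_set0.
  exact: (@Ups_Fp_fin 2 erefl nuFp2).
Qed.

End main.

Theorem proposition3p3 (R : realType) (d : nat)
  (nu : {measure set (Rd R d) -> \bar R}) :
  LevyMeasure nu -> (LevyMeasure1 (Upsilon0 nu) <-> LevyMeasure1 nu).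
Proof. move=> hL; exact: main_iff. Qed.
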